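(* Let $(X,d)$ be a metric space with $|X|\geqslant 3$ and let $T\colon X\to X$ be a generalized Ćirić–Reich–Rus type mapping, i.e. there exist $\alpha,\lambda\geqslant 0$ with $2\alpha+\frac{3\lambda}{2}<1$ such that $$d(Tx,Ty)+d(Ty,Tz)+d(Tx,Tz)\leqslant \alpha\big(d(x,y)+d(y,z)+d(z,x)\big)+\lambda\big(d(x,Tx)+d(y,Ty)+d(z,Tz)\big)$$ for all pairwise distinct $x,y,z\in X$. Then $T$ is continuous at each of its fixed points. *)

(* Defs.v *)
From Stdlib Require Import Reals.
Open Scope R_scope.

Definition is_metric {X : Type} (d : X -> X -> R) : Prop :=
  (forall x y, 0 <= d x y) /\
  (forall x y, d x y = 0 <-> x = y) /\
  (forall x y, d x y = d y x) /\
  (forall x y z, d x z <= d x y + d y z).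

Definition at_least_three_points (X : Type) : Prop :=
  exists x y z : X, x <> y /\ y <> z /\ x <> z.

Definition gen_CRR_mapping {X : Type} (d : X -> X -> R) (T : X -> X) : Prop :=
  exists alpha lambda : R,
    0 <= alpha /\ 0 <= lambda /\ 2 * alpha + 3 * lambda / 2 < 1 /\
    forall x y z : X, x <> y -> y <> z -> x <> z ->
      d (T x) (T y) + d (T y) (T z) + d (T x) (T z)
      <= alpha * (d x y + d y z + d z x)
         + lambda * (d x (T x) + d y (T y) + d z (T z)).

Definition metric_continuous_at {X : Type} (d : X -> X -> R) (T : X -> X) (x0 : X) : Prop :=
  forall eps : R, 0 < eps -> exists delta : R, 0 < delta /\
    forall x : X, d x x0 < delta -> d (T x) (T x0) < eps.

(* Main.v *)
Require Import Defs.
From Stdlib Require Import Reals Lra Classical.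
Open Scope R_scope.

Theorem proposition3p4 (X : Type) (d : X -> X -> R) (T : X -> X) :
  is_metric d -> at_least_three_points X -> gen_CRR_mapping d T ->
  forall x0 : X, T x0 = x0 -> metric_continuous_at d T x0.
Proof.
  intros [Hpos [Hzero [Hsym Htri]]] _ [a [l [Ha [Hl [Hal H]]]]] x0 Hfix eps Heps.
  destruct (classic (exists z, z <> x0 /\ d z x0 < eps / 6)) as [[z [Hz Hzs]]|Hn].
  - exists (d z x0). split.
    + destruct (Hpos z x0) as [h|h]; [exact h|].
      exfalso; apply Hz; apply Hzero; auto.
    + intros x Hx.
      destruct (classic (x = x0)) as [->|Hxx0].
      { rewrite Hfix. assert (d x0 x0 = 0) by (apply Hzero; auto). lra. }
      assert (Hxz : x <> z).
      { intros ->. lra. }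
      assert (Hx0z : x0 <> z) by (intro; subst; auto).
      specialize (H x x0 z Hxx0 Hx0z Hxz).
      rewrite Hfix in H.
      assert (E0 : d x0 x0 = 0) by (apply Hzero; auto).
      rewrite E0 in H.
      set (r := d x x0) in *. set (s := d z x0) in *.
      set (u := d (T x) x0) in *. set (w := d x0 (T z)) in *.
      set (e := d (T x) (T z)) in *.
      assert (h1 : u <= w + e).
      { unfold u, w, e. pose proof (Htri (T x) (T z) x0). rewrite (Hsym (T z) x0) in H0. lra. }
      assert (h2 : w <= u + e).
      { unfold u, w, e. pose proof (Htri x0 (T x) (T z)). rewrite (Hsym x0 (T x)) in H0. lra. }
      assert (h3 : d x (T x) <= r + u).
      { unfold r, u. pose proof (Htri x x0 (T x)). rewrite (Hsym x0 (T x)) in H0. lra. }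
      assert (h4 : d z (T z) <= s + w).
      { unfold s, w. pose proof (Htri z x0 (T z)). lra. }
      assert (h5 : d x0 z + d z x <= 2 * (r + s)).
      { pose proof (Htri z x0 x). pose proof (Hsym x0 z). pose proof (Hsym x0 x).
        pose proof (Hpos x x0). unfold r, s in *. lra. }
      assert (h6 : a * (r + (d x0 z + d z x)) <= a * (3 * (r + s))).
      { apply Rmult_le_compat_l; auto. pose proof (Hpos x x0). pose proof (Hpos z x0). fold r s in H0, H1. lra. }
      assert (h7 : l * (d x (T x) + 0 + d z (T z)) <= l * (r + u + (s + w))).
      { apply Rmult_le_compat_l; auto. lra. }
      assert (hr : 0 <= r) by apply Hpos.
      assert (hs : 0 <= s) by apply Hpos.
      assert (hu : 0 <= u) by apply Hpos.
      assert (hw : 0 <= w) by apply Hpos.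
      assert (Er : r = d x x0) by reflexivity.
      assert (Es : s = d z x0) by reflexivity.
      assert (Eu : u = d (T x) x0) by reflexivity.
      assert (Ew : w = d x0 (T z)) by reflexivity.
      assert (Ee : e = d (T x) (T z)) by reflexivity.
      clearbody r s u w e.
      assert (Hmain : u + w + e <= a * (3 * (r + s)) + l * (r + u + (s + w))).
      { try rewrite <- Er in H. try replace (r + d x0 z + d z x) with (r + (d x0 z + d z x)) in H by ring. lra. }
      (* 2u <= K + l(u+w), 2w <= K + l(u+w), K = 3a(r+s) + l(r+s) *)
      assert (hsum : (u + w) * (1 - l) <= a * (3 * (r + s)) + l * (r + s)) by lra.
      assert (hK : a * (3 * (r + s)) + l * (r + s) <= 3/2 * (r + s)) by nra.
      assert (huw : u + w <= 9/2 * (r + s)) by nra.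
      assert (hu2 : 2 * u <= 3/2 * (r + s) + l * (u + w)) by nra.
      assert (hlu : l * (u + w) <= 3 * (r + s)) by nra.
      rewrite Hfix, <- Eu. lra.
  - exists (eps / 6). split; [lra|].
    intros x Hx.
    destruct (classic (x = x0)) as [->|Hxx0].
    + rewrite Hfix. assert (d x0 x0 = 0) by (apply Hzero; auto). lra.
    + exfalso; apply Hn; exists x; auto.
Qed.
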